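(* Let $p>0$, real numbers $A<B$, and $n\in\mathbb{N}$. Let $\Omega_{[A,B]}=\{x\in\mathbb{R}^n:\ A\le x_1\le x_2\le\dots\le x_n\le B\}$ and for $b\in\mathbb{R}$ let $q_b(x)=\sum_{i=1}^n\mathrm{ReLU}(x_i-b)$. Then for all $x,y\in\Omega_{[A,B]}$, $$\mathbb{E}_{b\sim U[A,B]}\,|q_b(x)-q_b(y)|^p\ \ge\ \frac{1}{8n(B-A)4^p}\,\|x-y\|_\infty^{p+1}.$$
   Context: $U[A,B]$ denotes the uniform distribution on the interval $[A,B]$. *)

(* Defs.v *)
From HB Require Import structures.
From mathcomp Require Import all_boot all_order all_algebra.
From mathcomp Require Import all_classical all_reals all_analysis.
Set Implicit Arguments. Unset Strict Implicit. Unset Printing Implicit Defensive.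
Import Order.TTheory GRing.Theory Num.Theory.
Local Open Scope ring_scope.

Definition relu {R : realType} (t : R) : R := Num.max t 0.

Definition qb {R : realType} {n : nat} (b : R) (x : 'I_n -> R) : R :=
  \sum_(i < n) relu (x i - b).

Definition in_Omega {R : realType} {n : nat} (A B : R) (x : 'I_n -> R) : Prop :=
  (forall i : 'I_n, A <= x i <= B) /\
  (forall i j : 'I_n, (i <= j)%N -> x i <= x j).

Definition supnorm {R : realType} {n : nat} (x : 'I_n -> R) : R :=
  \big[Num.max/0]_(i < n) `|x i|.

(* Main.v *)
Require Import Defs.
From HB Require Import structures.
From mathcomp Require Import all_boot all_order all_algebra.
From mathcomp Require Import all_classical all_reals all_analysis.
From mathcomp Require Import ring lra.
From mathcomp Require Import measurable_realfun.
Import Order.TTheory GRing.Theory Num.Theory.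
Local Open Scope ring_scope.

Section S.
Variable R : realType.

Lemma relu_cases (t : R) : (0 <= t /\ relu t = t) \/ (t <= 0 /\ relu t = 0).
Proof.
rewrite /relu; case: (leP 0 t) => h.
- by left; split.
- by right; split; [exact: ltW|].
Qed.

Lemma relu_lip (u b c : R) : `|relu (u - b) - relu (u - c)| <= `|b - c|.
Proof.
have h1 := ler_norm (b - c). have h2 : c - b <= `|b - c| by rewrite distrC ler_norm.
apply/ler_normlP; split;
case: (relu_cases (u - b)) => [[? ->]|[? ->]]; case: (relu_cases (u - c)) => [[? ->]|[? ->]]; lra.
Qed.

Definition hcl (a c t : R) := relu (t - a) - relu (t - c).

Lemma hcl_ge0 {a c t} : a <= c -> 0 <= hcl a c t.
Proof. rewrite /hcl => ?; case: (relu_cases (t - a)) => [[? ->]|[? ->]]; case: (relu_cases (t - c)) => [[? ->]|[? ->]]; lra. Qed.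
Lemma hcl_le {a c t} : a <= c -> hcl a c t <= c - a.
Proof. rewrite /hcl => ?; case: (relu_cases (t - a)) => [[? ->]|[? ->]]; case: (relu_cases (t - c)) => [[? ->]|[? ->]]; lra. Qed.
Lemma hcl_lo {a c t} : a <= c -> t <= a -> hcl a c t = 0.
Proof. rewrite /hcl => ? ?; case: (relu_cases (t - a)) => [[? ->]|[? ->]]; case: (relu_cases (t - c)) => [[? ->]|[? ->]]; lra. Qed.
Lemma hcl_hi {a c t} : a <= c -> c <= t -> hcl a c t = c - a.
Proof. rewrite /hcl => ? ?; case: (relu_cases (t - a)) => [[? ->]|[? ->]]; case: (relu_cases (t - c)) => [[? ->]|[? ->]]; lra. Qed.

Definition gg {n} (x y : 'I_n -> R) b := qb b x - qb b y.

Lemma gdiff {n} (x y : 'I_n -> R) a c :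
  gg x y a - gg x y c = \sum_(i < n) (hcl a c (x i) - hcl a c (y i)).
Proof.
rewrite /gg /qb /hcl sumrB !sumrB. lra.
Qed.


Lemma key {n} (A B : R) (x y : 'I_n -> R) (k : 'I_n) :
  in_Omega A B x -> in_Omega A B y -> y k <= x k ->
  x k - y k <= gg x y (y k) - gg x y (x k).
Proof.
move=> [_ mx] [_ my] hk; rewrite gdiff (bigD1 k) //=.
rewrite (hcl_hi hk (lexx _)) (hcl_lo hk (lexx _)) subr0 lerDl.
apply: sumr_ge0 => i _.
case: (leqP k i) => hki.
- rewrite (hcl_hi hk (mx _ _ hki)) subr_ge0; exact: hcl_le.
- rewrite (hcl_lo hk (my _ _ (ltnW hki))) subr0; exact: hcl_ge0.
Qed.

Lemma g_lip {n} (x y : 'I_n -> R) b c :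
  `|gg x y b - gg x y c| <= 2 * n%:R * `|b - c|.
Proof.
have -> : gg x y b - gg x y c =
  \sum_(i < n) (relu (x i - b) - relu (x i - c)) - \sum_(i < n) (relu (y i - b) - relu (y i - c)).
  by rewrite /gg /qb !sumrB; lra.
have h : forall z : 'I_n -> R, `|\sum_(i < n) (relu (z i - b) - relu (z i - c))| <= n%:R * `|b - c|.
  move=> z; apply: (le_trans (ler_norm_sum _ _ _)).
  apply: (le_trans (ler_sum _ (fun i _ => relu_lip (z i) b c))).
  by rewrite sumr_const card_ord mulr_natl.
apply: (le_trans (ler_normB _ _)).
have := h x; have := h y; lra.
Qed.


Lemma good_interval {n} (x y : 'I_n -> R) (A B d b0 : R) : (0 < n)%N -> 0 < d -> d <= B - A ->
  A <= b0 <= B -> d / 2 <= `|gg x y b0| ->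
  exists a, [/\ A <= a, a + d / (8 * n%:R) <= B &
    forall b, a <= b <= a + d / (8 * n%:R) -> d / 4 <= `|gg x y b| ].
Proof.
move=> n0 d0 dAB /andP[Ab0 b0B] hb0.
have n1 : 1 <= n%:R :> R by rewrite ler1n.
set δ := d / (8 * n%:R).
have nz : 8 * n%:R != 0 :> R by rewrite mulf_neq0 // gt_eqF // (lt_le_trans ltr01 n1).
have e1 : δ * (8 * n%:R) = d by rewrite /δ divfK.
have dpos : 0 < δ by rewrite /δ divr_gt0 // mulr_gt0 // (lt_le_trans ltr01 n1).
have e2 : δ <= d / 8 by nra.
have key2 : forall b, `|b - b0| <= δ -> d / 4 <= `|gg x y b|.
  move=> b hb.
  have l := g_lip x y b0 b.
  have : 2 * n%:R * `|b0 - b| <= 2 * n%:R * δ.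
    by rewrite distrC ler_wpM2l // mulr_ge0 // ler0n.
  have t := ler_normB (gg x y b0) (gg x y b).
  have t2 : `|gg x y b0| <= `|gg x y b| + `|gg x y b0 - gg x y b|.
    have := ler_normD (gg x y b) (gg x y b0 - gg x y b).
    by rewrite addrC subrK addrC.
  nra.
case: (lerP b0 ((A + B) / 2)) => hm.
- exists b0; split => //; first lra.
  move=> b /andP[h1 h2]; apply: key2; apply/ler_normlP; split; lra.
- exists (b0 - δ); split; first lra; first lra.
  move=> b /andP[h1 h2]; apply: key2; apply/ler_normlP; split; lra.
Qed.


Lemma meas_g {n} (x y : 'I_n -> R) (p : R) :
  measurable_fun [set: R] (fun b : R => ((`|gg x y b| `^ p)%:E : \bar R)).
Proof.
apply/measurable_EFinP.
apply: (measurableT_comp (measurable_powR p)).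
apply: (measurableT_comp (@normr_measurable R _)).
rewrite /gg /qb.
apply: measurable_funB; apply: measurable_sum => i;
  rewrite /relu; apply: measurable_maxr => //;
  apply: measurable_funB => //.
Qed.


Ltac meas_tac :=
apply/measurable_EFinP;
apply: (measurableT_comp (measurable_powR _));
apply: (measurableT_comp (@normr_measurable _ _));
rewrite /gg /qb;
apply: measurable_funB; apply: measurable_sum => i;
  rewrite /relu; apply: measurable_maxr => //;
  apply: measurable_funB => //.

Local Open Scope classical_set_scope.
Local Open Scope ereal_scope.
Lemma integ_lb {n} (A B : R) (AB : (A < B)%R) (x y : 'I_n -> R) (p a δ c : R) :
  (0 < δ)%R -> (A <= a)%R -> (a + δ <= B)%R -> (0 <= c)%R -> (0 <= p)%R ->
  (forall b, (a <= b <= a + δ)%R -> (c <= `|gg x y b|)%R) ->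
  ((B - A)^-1 * (c `^ p * δ))%:E <= \int[uniform_prob AB]_b (`|gg x y b| `^ p)%:E.
Proof.
move=> d0 Aa aB c0 p0 hc.
rewrite integral_uniform //; last first.
  meas_tac.
rewrite EFinM; apply: lee_wpmul2l; first by rewrite lee_fin invr_ge0 subr_ge0 ltW.
have sub : `[a, (a + δ)%R]%classic `<=` `[A, B]%classic.
  move=> b /=; rewrite !in_itv /= => /andP[h1 h2].
  by apply/andP; split; [exact: le_trans h1| exact: le_trans aB].
apply: (@le_trans _ _ (\int[lebesgue_measure]_(b in `[a, (a + δ)%R]%classic) (`|gg x y b| `^ p)%:E)); last first.
  apply: ge0_subset_integral => //.
  - by apply: measurable_funTS; meas_tac.
apply: (@le_trans _ _ (\int[lebesgue_measure]_(b in `[a, (a + δ)%R]%classic) (cst (c `^ p)%:E b))); last first.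
  apply: ge0_le_integral => //.
  - by move=> b _; rewrite lee_fin powR_ge0.
  - by apply: measurable_funTS; meas_tac.
  - move=> b; rewrite /= in_itv /= => hb.
    rewrite lee_fin; apply: ge0_ler_powR => //; rewrite ?nnegrE ?powR_ge0 //.
    by apply: hc.
rewrite integral_cst //= lebesgue_measure_itv /= lte_fin ltrDl d0.
by rewrite -EFinD addrAC subrr add0r.
Qed.


Lemma pow_inv4 (p : R) : ((4^-1 : R) `^ p = (4 `^ p)^-1)%R.
Proof.
have h : ((4^-1 : R) `^ p * 4 `^ p = 1)%R.
  by rewrite -powRM ?invr_ge0 // mulVf // powR1.
have h4 : (4 `^ p != 0 :> R)%R by rewrite gt_eqF // powR_gt0.
by apply: (mulIf h4); rewrite h mulVf.
Qed.

Lemma core {n} (A B : R) (AB : (A < B)%R) (p : R) (hp : (0 < p)%R) (x y : 'I_n -> R) (k : 'I_n) :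
  in_Omega A B x -> in_Omega A B y -> (y k < x k)%R ->
  (((8 * n%:R * (B - A) * 4 `^ p)^-1 * (x k - y k) `^ (p + 1))%:E <=
   \int[uniform_prob AB]_b (`|gg x y b| `^ p)%:E).
Proof.
move=> Ox Oy hk.
set d := (x k - y k)%R.
have d0 : (0 < d)%R by rewrite subr_gt0.
have n0 : (0 < n)%N by apply: leq_ltn_trans (ltn_ord k).
have [xb yb] : (A <= x k <= B)%R /\ (A <= y k <= B)%R by split; [apply: Ox.1 | apply: Oy.1].
have dAB : (d <= B - A)%R.
  move: xb yb => /andP[? ?] /andP[? ?]; rewrite /d; lra.
have kk := @key n A B x y k Ox Oy (ltW hk).
have [b0 [hb0 gb0]] : exists b0, (A <= b0 <= B)%R /\ (d / 2 <= `|gg x y b0|)%R.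
  have t := ler_normB (gg x y (y k)) (gg x y (x k)).
  have t2 := ler_norm (gg x y (y k) - gg x y (x k)).
  case: (lerP (d / 2) (`|gg x y (y k)|)) => h1.
  - by exists (y k).
  - exists (x k); split => //; rewrite /d in h1 *; lra.
have [a [Aa aB ha]] := @good_interval n x y A B d b0 n0 d0 dAB hb0 gb0.
have n1 : (1 <= n%:R :> R)%R by rewrite ler1n.
have nz : (n%:R != 0 :> R)%R by rewrite gt_eqF // (lt_le_trans ltr01 n1).
have dp : (0 < d / (8 * n%:R))%R by rewrite divr_gt0 // mulr_gt0 // (lt_le_trans ltr01 n1).
have c0 : (0 <= d / 4)%R by rewrite divr_ge0 // ltW.
have := @integ_lb n A B AB x y p a (d / (8 * n%:R)) (d / 4) dp Aa aB c0 (ltW hp) ha.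
apply: le_trans; rewrite lee_fin.
rewrite powRD; last by apply/implyP => _; rewrite gt_eqF.
rewrite powRr1; last exact: ltW.
rewrite powRM ?(ltW d0) ?invr_ge0 // pow_inv4.
have h4 : (4 `^ p != 0 :> R)%R by rewrite gt_eqF // powR_gt0.
have hBA : (B - A != 0)%R by rewrite subr_eq0 gt_eqF.
rewrite le_eqVlt; apply/orP; left; apply/eqP; field.
by rewrite h4 hBA nz.
Qed.

End S.

Theorem mainTheorem8 (R : realType) (p A B : R) (n : nat)
  (hp : 0 < p) (AB : A < B) (x y : 'I_n -> R) :
  in_Omega A B x -> in_Omega A B y ->
  (\int[uniform_prob AB]_b ((`|qb b x - qb b y|) `^ p)%:E >=
   ((8 * n%:R * (B - A) * 4 `^ p)^-1 * (supnorm (fun i => x i - y i)) `^ (p + 1))%:E)%E.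
Proof.
move=> Ox Oy.
have ge0 : (0 <= \int[uniform_prob AB]_b ((`|qb b x - qb b y|) `^ p)%:E)%E.
  by apply: integral_ge0 => b _; rewrite lee_fin powR_ge0.
have zero : supnorm (fun i => x i - y i) = 0 ->
  (((8 * n%:R * (B - A) * 4 `^ p)^-1 * (supnorm (fun i => x i - y i)) `^ (p + 1))%:E <=
   \int[uniform_prob AB]_b ((`|qb b x - qb b y|) `^ p)%:E)%E.
  move=> ->; rewrite powR0 ?mulr0 //.
  by rewrite gt_eqF // addr_gt0.
have [d0|[k hk]] : supnorm (fun i => x i - y i) = 0 \/
    exists k, supnorm (fun i => x i - y i) = `|x k - y k|.
  case: (posnP n) => n0.
  - left; rewrite /supnorm; elim/big_ind: _ => //.
      by move=> a b -> ->; rewrite maxxx.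
    by move=> [i hi]; exfalso; move: hi; rewrite n0.
  - right.
    have [k _ hk] := @Order.TotalTheory.eq_bigmax _ R 'I_n 0 (Ordinal n0) xpredT (fun i => `|x i - y i|) isT (fun _ _ => normr_ge0 _).
    by exists k.
- exact: zero.
case: (ltgtP (y k) (x k)) => hxy.
- have h := @core R n A B AB p hp x y k Ox Oy hxy.
  rewrite hk gtr0_norm; last by rewrite subr_gt0.
  exact: h.
- have h := @core R n A B AB p hp y x k Oy Ox hxy.
  rewrite hk distrC gtr0_norm; last by rewrite subr_gt0.
  move: h.
  have -> : (\int[uniform_prob AB]_b (`|@gg R n y x b| `^ p)%:E = \int[uniform_prob AB]_b (`|@gg R n x y b| `^ p)%:E)%E.
    by apply: eq_integral => b _; rewrite /gg distrC.
  move=> h; exact: h.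
- by apply: zero; rewrite hk hxy subrr normr0.
Qed.
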